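(* Let $q$ be a prime power, $1\le\ell\le m$, $k=\binom{m}{\ell}$, and $n=\left[{m\atop \ell}\right]_q$. Then $d_s(C(\ell,m))=n-g_s(\ell,m)$ for $s=1,\dots,k$.
   Context: Let $V=\mathbb F_q^m$ with fixed basis $e_1,\dots,e_m$; identify $\bigwedge^mV$ with $\mathbb F_q$ via $e_1\wedge\cdots\wedge e_m=1$. Fix representatives $\omega'_1,\dots,\omega'_n\in\bigwedge^{\ell}V$, $\omega'_i=v_1\wedge\cdots\wedge v_\ell$ for a basis of the $i$-th $\ell$-dimensional subspace of $V$ (one for each such subspace), and let $T(\ell,m)=\{\omega'_1,\dots,\omega'_n\}$. The Grassmann code $C(\ell,m)$ is the image of the injective map $\tau:\bigwedge^{m-\ell}V\to\mathbb F_q^n$, $\tau(\omega)=(\omega'_1\wedge\omega,\dots,\omega'_n\wedge\omega)$. For a subspace $\mathcal E$ of $\bigwedge^{\ell}V$, $g(\mathcal E)=|\mathcal E\cap T(\ell,m)|$, and $g_s(\ell,m)=\max\{g(\mathcal E):\mathcal E\text{ a subspace of }\bigwedge^\ell V\text{ of codimension }s\}$. For a code $C$, $d_r(C)=\min\{\|D\|: D\subseteq C\text{ subspace},\ \dim D=r\}$, where $\|D\|$ is the number of coordinates $i$ such that $x_i\neq0$ for some $x\in D$. *)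

(* Defs.v *)
From HB Require Import structures.
From mathcomp Require Import all_boot all_order all_algebra.
Set Implicit Arguments. Unset Strict Implicit. Unset Printing Implicit Defensive.
Import GRing.Theory.
Local Open Scope ring_scope.

(* Grassmann codes C(l,m) over a finite field F (q = #|F|), V = F^m as 'rV[F]_m. *)

(* Strictly increasing maps 'I_l -> 'I_m : index the standard basis
   e_f = e_{f 0} /\ ... /\ e_{f (l-1)} of /\^l V. *)
Definition incr (l m : nat) :=
  {f : {ffun 'I_l -> 'I_m} | [forall i : 'I_l, forall j : 'I_l, (i < j)%N ==> (f i < f j)%N]}.

(* /\^l V is modelled by 'rV[F]_(#|incr l m|), coordinates w.r.t. the basis e_f. *)
Notation ext F l m := 'rV[F]_#|{: incr l m}|.

Definition coord (F : fieldType) l m (w : ext F l m) (f : incr l m) : F :=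
  w 0 (enum_rank f).

(* v_1 /\ ... /\ v_l for the rows v_i of M : its coordinates are the maximal minors *)
Definition wedge_rows (F : fieldType) l m (M : 'M[F]_(l, m)) : ext F l m :=
  \row_(i < #|{: incr l m}|) \det (colsub (val (enum_val i)) M).

(* e_f /\ e_g in /\^m V = F, identified via e_1 /\ ... /\ e_m = 1 *)
Definition wedge_basis (F : fieldType) l m (f : incr l m) (g : incr (m - l) m) : F :=
  \det (conform_mx (0 : 'M[F]_m)
          (col_mx (rowsub (val f) (1%:M : 'M[F]_m)) (rowsub (val g) (1%:M : 'M[F]_m)))).

Definition wedge (F : fieldType) l m (a : ext F l m) (b : ext F (m - l) m) : F :=
  \sum_(f : incr l m) \sum_(g : incr (m - l) m) coord a f * coord b g * wedge_basis F f g.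

(* the l-dimensional subspaces of V, each represented canonically by <<U>> *)
Definition grass (F : finFieldType) l m : {set 'M[F]_m} :=
  [set U : 'M[F]_m | (\rank U == l) && (<<U>>%MS == U)].

(* B U is a chosen basis (as rows) of U; omega'_U = wedge_rows (B U) *)
Definition Tset (F : finFieldType) l m (B : 'M[F]_m -> 'M[F]_(l, m)) : {set ext F l m} :=
  [set wedge_rows (B U) | U in grass F l m].

Definition tau (F : finFieldType) l m (B : 'M[F]_m -> 'M[F]_(l, m)) (w : ext F (m - l) m)
  : 'rV[F]_#|grass F l m| :=
  \row_i wedge (wedge_rows (B (enum_val i))) w.

Definition grassmann_code (F : finFieldType) l m (B : 'M[F]_m -> 'M[F]_(l, m))
  : {set 'rV[F]_#|grass F l m|} :=
  [set tau B w | w : ext F (m - l) m].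

(* g(E) and g_s(l,m); subspaces of /\^l V are row spaces of square matrices *)
Definition gE (F : finFieldType) l m (B : 'M[F]_m -> 'M[F]_(l, m))
  (E : 'M[F]_#|{: incr l m}|) : nat :=
  #|[set w in Tset B | (w <= E)%MS]|.

Definition g_s (F : finFieldType) l m (B : 'M[F]_m -> 'M[F]_(l, m)) (s : nat) : nat :=
  \max_(E : 'M[F]_#|{: incr l m}| | \rank E == (#|{: incr l m}| - s)%N) gE B E.

Definition supp_size (F : finFieldType) n (D : 'M[F]_n) : nat :=
  #|[set i : 'I_n | [exists x : 'rV[F]_n, (x <= D)%MS && (x 0 i != 0)]]|.

Definition dr (F : finFieldType) n (C : {set 'rV[F]_n}) (r : nat) : nat :=
  \big[minn/n]_(D : 'M[F]_n | (\rank D == r) &&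
                 [forall x : 'rV[F]_n, (x <= D)%MS ==> (x \in C)]) supp_size D.

(* Main.v *)
Require Import Defs.
From mathcomp Require Import all_boot all_order all_algebra all_fingroup zify ring.
Set Implicit Arguments. Unset Strict Implicit. Unset Printing Implicit Defensive.
Import GRing.Theory.
Section Incr.
Variables l m : nat.
Lemma incr_lt (f : incr l m) (i j : 'I_l) : (i < j)%N -> (val f i < val f j)%N.
Proof. by case: f => f /= /forallP /(_ i) /forallP /(_ j) /implyP. Qed.

Lemma incr_le (f : incr l m) (i j : 'I_l) : (i <= j)%N -> (val f i <= val f j)%N.
Proof.
rewrite leq_eqVlt => /orP[/eqP/val_inj -> //|/(incr_lt f)]; exact: ltnW.
Qed.

Lemma incr_ltE (f : incr l m) (i j : 'I_l) : (val f i < val f j)%N = (i < j)%N.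
Proof.
apply/idP/idP; last exact: incr_lt.
by apply: contraLR; rewrite -!leqNgt; apply: incr_le.
Qed.

Definition img (f : incr l m) : {set 'I_m} := [set val f i | i : 'I_l].

Lemma incr_inj (f : incr l m) : injective (val f).
Proof.
move=> i j e; apply: val_inj; case: (ltngtP i j) => // c.
  by move: (incr_lt f c); rewrite e ltnn.
by move: (incr_lt f c); rewrite e ltnn.
Qed.

Lemma card_img f : #|img f| = l.
Proof. by rewrite card_imset ?card_ord //; apply: incr_inj. Qed.

Lemma card_lt_ord (i : 'I_l) : #|[set a : 'I_l | (a < i)%N]| = i.
Proof.
have -> : [set a : 'I_l | (a < i)%N] = [set widen_ord (ltnW (ltn_ord i)) b | b : 'I_i].
  apply/setP => a; rewrite inE; apply/idP/imsetP.
    by move=> ai; exists (Ordinal ai) => //; apply: val_inj.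
  by case=> b _ ->; rewrite /= ltn_ord.
rewrite card_imset ?card_ord //.
by move=> x y e; apply: val_inj; exact: (congr1 val e).
Qed.

Lemma card_below (f : incr l m) (i : 'I_l) :
  #|[set x in img f | (x < val f i)%N]| = i.
Proof.
rewrite -(card_lt_ord i).
have -> : [set x in img f | (x < val f i)%N] = [set val f a | a in [set a : 'I_l | (a < i)%N]].
  apply/setP => x; rewrite !inE; apply/andP/imsetP.
    case=> /imsetP[a _ ->]; rewrite incr_ltE => ai.
    by exists a; rewrite // inE.
  case=> a; rewrite inE => ai ->.
  by rewrite imset_f // incr_ltE.
by rewrite card_imset //; apply: incr_inj.
Qed.

Lemma img_inj : injective img.
Proof.
suff H : forall f g : incr l m, img f = img g -> forall i, ~ (val f i < val g i)%N.
  move=> f g e; apply: val_inj; apply/ffunP => i.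
  apply: val_inj; case: (ltngtP (val f i) (val g i)) => // c.
  - by case: (H f g e i).
  - by case: (H g f (esym e) i).
move=> f g e i lt.
have : [set x in img f | (x < val f i)%N] \proper [set x in img g | (x < val g i)%N].
  apply/properP; split.
    apply/subsetP => x; rewrite !inE e => /andP[-> /= xi]; exact: ltn_trans xi lt.
  exists (val f i); first by rewrite inE -e imset_f.
  by rewrite inE ltnn andbF.
by move/proper_card; rewrite !card_below ltnn.
Qed.

Lemma img_surj (S : {set 'I_m}) : #|S| = l -> exists f : incr l m, img f = S.
Proof.
move=> cS.
pose h (i : 'I_l) : 'I_m := enum_val (cast_ord (esym cS) i).
have srt : sorted (fun x y : 'I_m => (x < y)%N) (enum S).
  rewrite /enum_mem -enumT /=.
  apply: sorted_filter; first by move=> x y z; apply: ltn_trans.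
  by have := iota_ltn_sorted 0 m; rewrite -val_enum_ord sorted_map.
have hlt : [forall i : 'I_l, forall j : 'I_l, (i < j)%N ==> ([ffun i => h i] i < [ffun i => h i] j)%N].
  apply/forallP => i; apply/forallP => j; apply/implyP => ij; rewrite !ffunE.
  have x0 : 'I_m by exact: h i.
  rewrite /h !(enum_val_nth x0).
  apply: (sorted_ltn_nth (leT := fun x y : 'I_m => (x < y)%N)) => //.
  - by move=> x y z; apply: ltn_trans.
  - by rewrite inE -cardE /= cS.
  - by rewrite inE -cardE /= cS.
exists (exist _ [ffun i => h i] hlt).
apply/eqP; rewrite eqEcard card_img cS leqnn andbT.
apply/subsetP => x /imsetP[i _ ->]; rewrite /= ffunE; exact: enum_valP.
Qed.

Lemma card_incr : #|{: incr l m}| = 'C(m, l).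
Proof.
have := card_draws 'I_m l; rewrite card_ord => <-.
have -> : [set A : {set 'I_m} | #|A| == l] = [set img f | f : incr l m].
  apply/setP => A; rewrite inE; apply/eqP/imsetP.
    by move/img_surj => [f <-]; exists f.
  by case=> f _ ->; rewrite card_img.
by rewrite card_imset //; apply: img_inj.
Qed.

Lemma factor_inj (k : 'I_l -> 'I_m) : injective k ->
  exists (g : incr l m) (s : {perm 'I_l}), forall a, k a = val g (s a).
Proof.
move=> ki.
have [g eg] : exists g : incr l m, img g = [set k a | a : 'I_l].
  by apply: img_surj; rewrite card_imset ?card_ord.
have ex a : exists b, val g b == k a.
  have : k a \in img g by rewrite eg imset_f.
  by case/imsetP => b _ e; exists b; rewrite e.
pose sg a := odflt a [pick b | val g b == k a].
have sgE a : val g (sg a) = k a.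
  rewrite /sg; case: pickP => [b /eqP //|H].
  by case: (ex a) => b; rewrite H.
have sgi : injective sg by move=> a b e; apply: ki; rewrite -!sgE e.
by exists g, (perm sgi) => a; rewrite permE sgE.
Qed.
End Incr.

Local Open Scope ring_scope.

Section Det.
Variable F : fieldType.

Lemma det_col0 n (A : 'M[F]_n) b : (forall a, A a b = 0) -> \det A = 0.
Proof.
move=> H; rewrite (expand_det_col _ b) big1 // => a _; by rewrite H mul0r.
Qed.

Lemma det_cols_eq n (A : 'M[F]_n) b1 b2 : b1 != b2 ->
  (forall a, A a b1 = A a b2) -> \det A = 0.
Proof.
move=> nb H; rewrite -det_tr; apply: (determinant_alternate nb) => a.
by rewrite !mxE.
Qed.

Lemma det_onecol n (X : 'M[F]_n) a :
  (forall r c, c != a -> X r c = (r == c)%:R) -> \det X = X a a.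
Proof.
move=> H; rewrite (expand_det_col _ a) (bigD1 a) //= big1 ?addr0.
  rewrite /cofactor addnn -signr_odd odd_double expr0 mul1r.
  suff -> : row' a (col' a X) = 1%:M by rewrite det1 mulr1.
  apply/matrixP => i j; rewrite !mxE H; last by rewrite eq_sym neq_lift.
  by rewrite (inj_eq (@lift_inj _ a)).
move=> r nra; case: (unliftP a r) => [c ->|e]; last by rewrite e eqxx in nra.
rewrite /cofactor (@det_col0 _ _ c) ?mulr0 // => i.
rewrite !mxE H; last by rewrite eq_sym neq_lift.
by rewrite eq_sym (negPf (neq_lift _ _)).
Qed.

Lemma minor_eq l m (M M' : 'M[F]_(l, m)) : wedge_rows M = wedge_rows M' ->
  forall k : 'I_l -> 'I_m, \det (colsub k M) = \det (colsub k M').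
Proof.
move=> e k; case: (boolP (injectiveb k)) => [/injectiveP ki|].
  have [g [s gs]] := factor_inj ki.
  have H (A : 'M[F]_(l, m)) : \det (colsub k A) = \det (colsub (val g) A) * (-1) ^+ (s^-1)%g.
    have -> : colsub k A = colsub (val g) A *m perm_mx s^-1.
      by rewrite -col_permE; apply/matrixP => i j; rewrite !mxE gs.
    by rewrite det_mulmx det_perm.
  rewrite !H; congr (_ * _).
  move/matrixP: e => /(_ 0 (enum_rank g)); by rewrite !mxE enum_rankK.
case/injectivePn => a [b nab kab].
by rewrite !(det_cols_eq nab) // => r; rewrite !mxE kab.
Qed.

Lemma wedge_rowsM l m (A : 'M[F]_l) (M : 'M[F]_(l, m)) :
  wedge_rows (A *m M) = \det A *: wedge_rows M.
Proof.
apply/rowP => i; rewrite !mxE -mulmx_colsub det_mulmx //.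
Qed.

Lemma exists_nz_minor l m (M : 'M[F]_(l, m)) : \rank M = l ->
  exists k : 'I_l -> 'I_m, colsub k M \in unitmx.
Proof.
move=> rM.
have rf : row_full M^T by rewrite /row_full mxrank_tr rM.
exists (fullrankfun rf).
rewrite -unitmx_tr; have -> : (colsub (fullrankfun rf) M)^T = rowsub (fullrankfun rf) M^T.
  by apply/matrixP => i j; rewrite !mxE.
exact: fullrowsub_unit.
Qed.

Lemma plucker_inj l m (M M' : 'M[F]_(l, m)) : \rank M = l ->
  wedge_rows M = wedge_rows M' -> (M == M')%MS.
Proof.
move=> rM e.
have [k0 u0] := exists_nz_minor rM.
have me := minor_eq e.
have u0' : colsub k0 M' \in unitmx by rewrite unitmxE -me -unitmxE.
pose N1 := invmx (colsub k0 M) *m M.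
pose N1' := invmx (colsub k0 M') *m M'.
have dN k : \det (colsub k N1) = \det (colsub k N1').
  by rewrite /N1 /N1' -!mulmx_colsub !det_mulmx !det_inv !me.
have c1 : colsub k0 N1 = 1%:M by rewrite /N1 -mulmx_colsub mulVmx.
have c1' : colsub k0 N1' = 1%:M by rewrite /N1' -mulmx_colsub mulVmx.
have entry (Q : 'M[F]_(l, m)) : colsub k0 Q = 1%:M -> forall i j,
    Q i j = \det (colsub (fun c => if c == i then j else k0 c) Q).
  move=> cQ i j; rewrite (@det_onecol _ _ i).
    by rewrite !mxE eqxx.
  move=> r c nci; rewrite !mxE (negPf nci).
  by have /matrixP /(_ r c) := cQ; rewrite !mxE.
have eN : N1 = N1' by apply/matrixP => i j; rewrite (entry _ c1) (entry _ c1') dN.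
have eqM : (N1 :=: M)%MS by apply: eqmxMfull; rewrite row_full_unit unitmx_inv.
have eqM' : (N1' :=: M')%MS by apply: eqmxMfull; rewrite row_full_unit unitmx_inv.
apply/eqmxP; apply: (eqmx_trans (eqmx_sym eqM)); rewrite eN; exact: eqM'.
Qed.
End Det.


Section WB.
Variable F : fieldType.
Variables l m : nat.
Hypothesis lm : (l <= m)%N.
Let e : (l + (m - l))%N = m := subnKC lm.

Definition hfun (f : incr l m) (g : incr (m - l) m) (i : 'I_m) : 'I_m :=
  match split (cast_ord (esym e) i) with inl a => val f a | inr b => val g b end.

Lemma wb_rowsub f g : wedge_basis F f g = \det (rowsub (hfun f g) 1%:M).
Proof.
rewrite /wedge_basis -(conform_castmx (e, erefl m)) conform_mx_id.
congr (\det _); apply/matrixP => i j; rewrite castmxE !mxE /= cast_ord_id /hfun.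
by case: split => a; rewrite !mxE.
Qed.

Lemma det_rowsub1 n (h : 'I_n -> 'I_n) :
  \det (rowsub h (1%:M : 'M[F]_n)) ^+ 2 = (injectiveb h)%:R.
Proof.
case: (boolP (injectiveb h)) => [/injectiveP hi|].
  have -> : rowsub h 1%:M = (perm_mx (perm hi) : 'M[F]_n).
     by apply/matrixP => i j; rewrite !mxE permE.
  by rewrite det_perm sqrr_sign.
case/injectivePn => a [b nab hab].
rewrite (@determinant_alternate _ _ _ a b nab) ?expr0n //.
by move=> j; rewrite !mxE hab.
Qed.

Lemma det_rowsub1_0 n (h : 'I_n -> 'I_n) : ~~ injectiveb h ->
  \det (rowsub h (1%:M : 'M[F]_n)) = 0.
Proof.
case/injectivePn => a [b nab hab].
by rewrite (@determinant_alternate _ _ _ a b nab) // => j; rewrite !mxE hab.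
Qed.

Lemma hfun_l f g a : hfun f g (cast_ord e (lshift (m - l) a)) = val f a.
Proof. by rewrite /hfun cast_ordK (unsplitK (inl _ a)). Qed.

Lemma hfun_r f g b : hfun f g (cast_ord e (rshift l b)) = val g b.
Proof. by rewrite /hfun cast_ordK (unsplitK (inr _ b)). Qed.

Lemma hfun_img f g : [set hfun f g i | i : 'I_m] = img f :|: img g.
Proof.
apply/setP => x; apply/imsetP/setUP.
  case=> i _ ->; rewrite /hfun; case: split => a.
    by left; rewrite imset_f.
  by right; rewrite imset_f.
case=> /imsetP[a _ ->].
  by exists (cast_ord e (lshift (m - l) a)); rewrite ?hfun_l.
by exists (cast_ord e (rshift l a)); rewrite ?hfun_r.
Qed.

Definition disj (f : incr l m) (g : incr (m - l) m) := [disjoint img f & img g].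

Lemma hfun_inj f g : injectiveb (hfun f g) = disj f g.
Proof.
have cU : #|[set hfun f g i | i : 'I_m]| = (m - #|img f :&: img g|)%N.
  by rewrite hfun_img cardsU !card_img subnKC.
have le := subset_leq_card (subsetT (img f :&: img g)); rewrite cardsT card_ord in le.
apply/injectiveP/idP => [hi|dj].
  have := card_imset (mem 'I_m) hi; rewrite cU card_ord => H.
  rewrite /disj -setI_eq0 -cards_eq0; apply/eqP; lia.
have := @imset_injP _ _ (hfun f g) (mem 'I_m).
rewrite cU card_ord (disjoint_setI0 dj) cards0 subn0 eqxx => /(_ isT) hi.
by move=> x y; apply: hi.
Qed.

Lemma disjC f g : disj f g = (img g == ~: img f).
Proof.
apply/idP/eqP => [dj|e']; last by rewrite /disj e' disjoints_subset setCK.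
apply/eqP; rewrite eqEcard; apply/andP; split.
  by rewrite -disjoints_subset disjoint_sym.
by rewrite cardsCs setCK !card_img card_ord.
Qed.

Lemma wb_sq f g : wedge_basis F f g ^+ 2 = (disj f g)%:R.
Proof. by rewrite wb_rowsub det_rowsub1 hfun_inj. Qed.

Lemma wb0 f g : ~~ disj f g -> wedge_basis F f g = 0.
Proof. by rewrite wb_rowsub -hfun_inj; apply: det_rowsub1_0. Qed.

Lemma disj_uniq_r f g g' : disj f g -> disj f g' -> g = g'.
Proof. by rewrite !disjC => /eqP e1 /eqP e2; apply: img_inj; rewrite e1 e2. Qed.

Lemma disj_uniq_l f f' g : disj f g -> disj f' g -> f = f'.
Proof.
rewrite !disjC => /eqP e1 /eqP e2; apply: img_inj.
by rewrite -(setCK (img f)) -(setCK (img f')) -e1 -e2.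
Qed.

Lemma disj_ex_r f : exists g, disj f g.
Proof.
have [g eg] : exists g : incr (m - l) m, img g = ~: img f.
  by apply: img_surj; rewrite cardsCs setCK card_img card_ord.
by exists g; rewrite disjC eg.
Qed.

Lemma disj_ex_l g : exists f, disj f g.
Proof.
have [f ef] : exists f : incr l m, img f = ~: img g.
  apply: img_surj; rewrite cardsCs setCK card_img card_ord; lia.
by exists f; rewrite disjC ef setCK.
Qed.
End WB.


Section Main.
Variable F : finFieldType.
Variables l m : nat.
Hypothesis lm : (l <= m)%N.

Definition Pm : 'M[F]_(#|{: incr l m}|, #|{: incr (m - l) m}|) :=
  \matrix_(i, j) wedge_basis F (enum_val i) (enum_val j).

Lemma PtP : Pm^T *m Pm = 1%:M.
Proof.
apply/matrixP => j j'; rewrite !mxE.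
have [<-|njj] := eqVneq j j'.
  have [f0 d0] := disj_ex_l lm (enum_val j).
  rewrite (bigD1 (enum_rank f0)) //= big1.
    by rewrite !mxE enum_rankK -expr2 (wb_sq _ lm) (_ : disj _ _ = true) ?addr0.
  move=> i ni; rewrite !mxE -expr2 (wb_sq _ lm).
  case: (boolP (disj _ _)) => // di.
  by rewrite -(disj_uniq_l di d0) enum_valK eqxx in ni.
rewrite big1 // => i _; rewrite !mxE.
case: (boolP (disj (enum_val i) (enum_val j))) => di; last by rewrite (wb0 _ lm) ?mul0r.
case: (boolP (disj (enum_val i) (enum_val j'))) => di'; last by rewrite (wb0 _ lm di') mulr0.
by have := disj_uniq_r di di' => /enum_val_inj e; rewrite e eqxx in njj.
Qed.

Lemma PPt : Pm *m Pm^T = 1%:M.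
Proof.
apply/matrixP => i i'; rewrite !mxE.
have [<-|nii] := eqVneq i i'.
  have [g0 d0] := disj_ex_r (enum_val i).
  rewrite (bigD1 (enum_rank g0)) //= big1.
    by rewrite !mxE enum_rankK -expr2 (wb_sq _ lm) (_ : disj _ _ = true) ?addr0.
  move=> j nj; rewrite !mxE -expr2 (wb_sq _ lm).
  case: (boolP (disj _ _)) => // dj.
  by rewrite -(disj_uniq_r dj d0) enum_valK eqxx in nj.
rewrite big1 // => j _; rewrite !mxE.
case: (boolP (disj (enum_val i) (enum_val j))) => di; last by rewrite (wb0 _ lm) ?mul0r.
case: (boolP (disj (enum_val i') (enum_val j))) => di'; last by rewrite (wb0 _ lm di') mulr0.
by have := disj_uniq_l di di' => /enum_val_inj e; rewrite e eqxx in nii.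
Qed.

Lemma Pm_free : row_free Pm.
Proof. by apply/row_freeP; exists Pm^T; apply: PPt. Qed.

Lemma Pmt_free : row_free Pm^T.
Proof. by apply/row_freeP; exists Pm; apply: PtP. Qed.

Lemma Pmt_full : row_full Pm^T.
Proof. by apply/row_fullP; exists Pm; apply: PPt. Qed.

Lemma NN' : #|{: incr l m}| = #|{: incr (m - l) m}|.
Proof.
have := Pm_free; have := Pmt_free; rewrite /row_free mxrank_tr => /eqP h1 /eqP h2.
by rewrite -h1 h2.
Qed.
End Main.


Section G.
Variable F : finFieldType.
Variables l m : nat.
Hypothesis lm : (l <= m)%N.
Variable B : 'M[F]_m -> 'M[F]_(l, m).
Hypothesis hB : forall U, U \in grass F l m -> (B U == U)%MS.

Definition om U := wedge_rows (B U).
Definition Tm : 'M[F]_(#|grass F l m|, #|{: incr l m}|) :=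
  \matrix_(i, j) om (enum_val i) 0 j.
Definition Gm := (Pm F l m)^T *m Tm^T.

Lemma row_Tm i : row i Tm = om (enum_val i).
Proof. by apply/rowP => j; rewrite !mxE. Qed.

Lemma rank_grass U : U \in grass F l m -> \rank (B U) = l.
Proof.
by move=> gU; rewrite (eqmx_rank (hB gU)); move: gU; rewrite inE => /andP[/eqP].
Qed.

Lemma wr_coord (f : incr l m) :
  wedge_rows (rowsub (val f) (1%:M : 'M[F]_m)) = delta_mx 0 (enum_rank f).
Proof.
apply/rowP => i; rewrite !mxE /=.
have [->|ne] := eqVneq i (enum_rank f).
  rewrite enum_rankK.
  have -> : colsub (val f) (rowsub (val f) (1%:M : 'M[F]_m)) = 1%:M.
    by apply/matrixP => a b; rewrite !mxE (inj_eq (@incr_inj _ _ f)).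
  by rewrite det1.
have nfg : enum_val i != f by apply: contra ne => /eqP <-; rewrite enum_valK.
have : ~~ (img (enum_val i) \subset img f).
  apply: contra nfg => sub; apply/eqP; apply: img_inj; apply/eqP.
  by rewrite eqEcard sub !card_img leqnn.
case/subsetPn => x /imsetP[b _ ->] nx.
apply: (@det_col0 _ _ _ b) => a; rewrite !mxE.
case: eqP => // e; by rewrite -e imset_f in nx.
Qed.

Lemma Tm_full : row_full Tm.
Proof.
rewrite -sub1mx; apply/row_subP => i; rewrite row1.
set f := enum_val i.
pose R := rowsub (val f) (1%:M : 'M[F]_m).
have RRt : R *m R^T = 1%:M.
  apply/matrixP => a b; rewrite !mxE.
  rewrite (bigD1 (val f a)) //= big1 ?addr0.
    by rewrite !mxE eqxx mul1r (inj_eq (@incr_inj _ _ f)) eq_sym.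
  by move=> c nc; rewrite !mxE eq_sym (negPf nc) mul0r.
have Rfree : row_free R by apply/row_freeP; exists R^T.
have gU : <<R>>%MS \in grass F l m.
  rewrite inE mxrank_gen genmx_id eqxx andbT.
  exact: Rfree.
have BR : (B <<R>>%MS <= R)%MS by rewrite (eqmxP (hB gU)) genmxE.
pose X := B <<R>>%MS *m pinvmx R.
have XR : X *m R = B <<R>>%MS by rewrite mulmxKpV.
have Xu : X \in unitmx.
  rewrite -row_free_unit /row_free -(mxrankMfree _ Rfree) XR.
  by rewrite (rank_grass gU).
have omU : om <<R>>%MS = \det X *: delta_mx 0 (enum_rank f).
  by rewrite /om -XR wedge_rowsM wr_coord.
have : (om <<R>>%MS <= Tm)%MS.
  by apply: (eq_row_sub (enum_rank_in gU <<R>>%MS)); rewrite row_Tm enum_rankK_in.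
rewrite omU /f enum_valK => H.
have := scalemx_sub (\det X)^-1 H; rewrite scalerA mulVf ?scale1r //.
by rewrite -unitfE -unitmxE.
Qed.

Lemma Gm_free : row_free Gm.
Proof.
rewrite /row_free -mxrank_tr /Gm trmx_mul !trmxK mxrankMfree ?Pm_free //.
by have := Tm_full; rewrite /row_full => /eqP ->; rewrite (NN' F lm).
Qed.

Lemma sum_enum (T : finType) (Fn : T -> F) :
  \sum_(x : T) Fn x = \sum_(i < #|{: T}|) Fn (enum_val i).
Proof.
rewrite (reindex (@enum_val T (mem predT))) //.
by exists enum_rank => x _; [exact: enum_valK | exact: enum_rankK].
Qed.

Lemma tauE w : tau B w = w *m Gm.
Proof.
apply/rowP => i; rewrite !mxE /wedge sum_enum.
under eq_bigr => k _ do rewrite sum_enum.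
rewrite exchange_big /=; apply: eq_bigr => j _.
rewrite !mxE big_distrr /=; apply: eq_bigr => k _.
rewrite /Defs.coord !mxE !enum_valK; ring.
Qed.

Lemma code_mem x : (x \in grassmann_code B) = (x <= Gm)%MS.
Proof.
apply/imsetP/idP => [[w _ ->]|xG]; first by rewrite tauE submxMl.
by exists (x *m pinvmx Gm) => //; rewrite tauE mulmxKpV.
Qed.

Lemma om_inj : {in grass F l m &, injective om}.
Proof.
move=> U U' gU gU' e.
have BB : (B U == B U')%MS := plucker_inj (rank_grass gU) e.
have UU : (U == U')%MS.
  apply/eqmxP; apply: eqmx_trans (eqmx_sym (eqmxP (hB gU))) _.
  by apply: eqmx_trans (eqmxP BB) (eqmxP (hB gU')).
move: gU gU'; rewrite !inE => /andP[_ /eqP <-] /andP[_ /eqP <-].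
exact/genmxP.
Qed.

Lemma gE_Z E : gE B E = #|[set i : 'I_#|grass F l m| | (om (enum_val i) <= E)%MS]|.
Proof.
rewrite /gE.
have -> : [set w in Tset B | (w <= E)%MS] = om @: [set U in grass F l m | (om U <= E)%MS].
  apply/setP => w; rewrite inE; apply/andP/imsetP.
    by case=> /imsetP[U gU ->] sE; exists U; rewrite // inE gU.
  by case=> U; rewrite inE => /andP[gU sE] ->; split => //; apply: imset_f.
rewrite card_in_imset; last first.
  move=> x y /[!inE] /andP[gx _] /andP[gy _].
  by apply: om_inj; rewrite inE.
have -> : [set U in grass F l m | (om U <= E)%MS] = enum_val @: [set i : 'I_#|grass F l m| | (om (enum_val i) <= E)%MS].
  apply/setP => U; rewrite inE; apply/andP/imsetP.
    case=> gU sE; exists (enum_rank_in gU U); rewrite ?inE enum_rankK_in //.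
  by case=> i; rewrite inE => sE ->; rewrite enum_valP.
by rewrite card_imset //; apply: enum_val_inj.
Qed.
End G.


Lemma supp_col (F : finFieldType) k n (D : 'M[F]_(k, n)) i :
  [exists x : 'rV_n, (x <= D)%MS && (x 0 i != 0)] = (col i D != 0).
Proof.
apply/existsP/idP => [[x /andP[/submxP[y ->] nz]]|].
  apply: contra nz => /eqP c0; rewrite !mxE big1 // => r _.
  by have /matrixP /(_ r 0) := c0; rewrite !mxE => ->; rewrite mulr0.
case: (boolP [exists r, D r i != 0]) => [/existsP[r nr] _|/existsPn H].
  by exists (row r D); rewrite row_sub mxE.
case/negP; apply/eqP/matrixP => r j; rewrite !mxE.
by have := H r; rewrite negbK => /eqP.
Qed.

Lemma supp_sizeE (F : finFieldType) n (D : 'M[F]_n) :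
  supp_size D = (n - #|[set i : 'I_n | (col i D == 0)%R]|)%N.
Proof.
rewrite /supp_size.
have -> : [set i : 'I_n | [exists x : 'rV_n, (x <= D)%MS && (x 0 i != 0)]] =
          ~: [set i : 'I_n | col i D == 0].
  by apply/setP => i; rewrite !inE supp_col.
by rewrite cardsCs setCK card_ord.
Qed.

Lemma bigmin_le (I : finType) (P : pred I) (Fn : I -> nat) x j :
  P j -> (\big[minn/x]_(i | P i) Fn i <= Fn j)%N.
Proof.
move=> Pj; rewrite unlock.
have : j \in index_enum I by rewrite mem_index_enum.
elim: (index_enum I) => //= a s IH; rewrite inE => /orP[/eqP <-|js].
  by rewrite Pj geq_minl.
case: (P a); last exact: IH.
exact: leq_trans (geq_minr _ _) (IH js).
Qed.

Section Fin.
Variable F : finFieldType.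
Variables l m : nat.
Hypothesis lm : (l <= m)%N.
Variable B : 'M[F]_m -> 'M[F]_(l, m).
Hypothesis hB : forall U, U \in grass F l m -> (B U == U)%MS.

Lemma col_zero k (X : 'M[F]_(k, #|{: incr (m - l) m}|)) i :
  (col i (X *m Gm B) == 0) = (row i (Tm B) *m (Pm F l m *m X^T) == 0).
Proof.
rewrite -trmx_eq0 tr_col /Gm !trmx_mul !trmxK !row_mul mulmxA.
by [].
Qed.

Lemma main s : (s <= #|{: incr l m}|)%N ->
  dr (grassmann_code B) s = (#|grass F l m| - g_s B s)%N.
Proof.
move=> sN.
set n := #|grass F l m|.
set N := #|{: incr l m}|.
have Zsupp k (X : 'M[F]_(k, #|{: incr (m - l) m}|)) (K : 'M[F]_N) (D : 'M[F]_n) :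
    (D :=: X *m Gm B)%MS -> (forall i, (col i (X *m Gm B) == 0) = (om B (enum_val i) <= K)%MS) ->
    supp_size D = (n - gE B K)%N.
  move=> eD H; rewrite /supp_size (gE_Z hB).
  have -> : [set i : 'I_n | [exists x : 'rV_n, (x <= D)%MS && (x 0 i != 0)]] =
            ~: [set i : 'I_n | (om B (enum_val i) <= K)%MS].
    apply/setP => i; rewrite !inE -H -supp_col; apply: eq_existsb => x; by rewrite eD.
  by rewrite cardsCs setCK card_ord.
apply/eqP; rewrite eqn_leq; apply/andP; split.
  have pos : (0 < #|(fun E : 'M[F]_N => \rank E == (N - s)%N)|)%N.
    apply/card_gt0P; exists (pid_mx (N - s)).
    by rewrite /in_mem /= rank_pid_mx ?leq_subr.
  have [E0 hE0 eqE0] := @eq_bigmax_cond _ (fun E : 'M[F]_N => \rank E == (N - s)%N) (gE B) pos.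
  have gsE : g_s B s = gE B E0 by rewrite -eqE0.
  have rE0 : \rank E0 = (N - s)%N by apply/eqP; exact: hE0.
  pose X := (cokermx E0)^T *m pinvmx (Pm F l m)^T.
  have XP : X *m (Pm F l m)^T = (cokermx E0)^T.
    by rewrite mulmxKpV // submx_full // Pmt_full.
  have rX : \rank X = s.
    rewrite -(mxrankMfree _ (Pmt_free F lm)) XP mxrank_tr mxrank_coker rE0.
    exact: subKn.
  pose D := <<X *m Gm B>>%MS.
  have rD : \rank D = s by rewrite mxrank_gen (mxrankMfree _ (Gm_free lm hB)).
  have cD : (\rank D == s) && [forall x, (x <= D)%MS ==> (x \in grassmann_code B)].
    rewrite rD eqxx /=; apply/forallP => x; apply/implyP => xD; rewrite code_mem.
    by apply: submx_trans xD _; rewrite genmxE submxMl.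
  apply: (@leq_trans (supp_size D)).
    rewrite /dr. apply: (bigmin_le (P := fun D : 'M[F]_n => (\rank D == s) && [forall x, (x <= D)%MS ==> (x \in grassmann_code B)])). exact: cD.
  rewrite (Zsupp _ X E0 D) ?gsE //; first exact: genmxE.
  move=> i; rewrite col_zero row_Tm submxE.
  by rewrite -[Pm F l m]trmxK -trmx_mul XP trmxK.
rewrite /dr; apply: (big_ind (fun v => n - g_s B s <= v)%N) => //.
- exact: leq_subr.
- by move=> x y hx hy; rewrite leq_min hx hy.
move=> D /andP[/eqP rD /forallP hD].
have DG : (D <= Gm B)%MS.
  apply/row_subP => r; rewrite -code_mem //.
  exact: (implyP (hD (row r D)) (row_sub r D)).
pose X := D *m pinvmx (Gm B).
have XG : X *m Gm B = D by rewrite mulmxKpV.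
have rX : \rank X = s by rewrite -rD -XG (mxrankMfree _ (Gm_free lm hB)).
pose K := kermx (Pm F l m *m X^T).
have rK : \rank K = (N - s)%N.
  by rewrite mxrank_ker -mxrank_tr trmx_mul trmxK (mxrankMfree _ (Pmt_free F lm)) rX.
rewrite (Zsupp _ X K D); first last.
- by move=> i; rewrite col_zero sub_kermx row_Tm.
- by rewrite XG.
apply: leq_sub2l; apply: leq_bigmax_cond; exact/eqP.
Qed.
End Fin.


Theorem corollary5p2 (F : finFieldType) (l m : nat) (B : 'M[F]_m -> 'M[F]_(l, m)) :
  (1 <= l <= m)%N ->
  (forall U, U \in grass F l m -> (B U == U)%MS) ->
  forall s : nat, (1 <= s <= 'C(m, l))%N ->
  dr (grassmann_code B) s = (#|grass F l m| - g_s B s)%N.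
Proof.
move=> /andP[_ lm] hB s /andP[_ sC].
by apply: main => //; rewrite card_incr.
Qed.
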